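(* There is an absolute constant $c>0$ such that for all $n,k\ge1$ and every $k$-monotone sequence $S\in[n]^n$ (a sequence of length $n$ over keys $[n]$), ${\mathit LF}^k(S)\le c\,nk$.
   Context: A sequence $X=(x_1,\dots,x_m)$ contains a permutation pattern $\pi$ of length $k$ if there are indices $i_1<\dots<i_k$ with $x_{i_a}<x_{i_b}$ iff $\pi(a)<\pi(b)$; otherwise it avoids $\pi$. $X$ is $k$-monotone if it avoids $(1,2,\dots,k)$ or avoids $(k,k-1,\dots,1)$. For a BST $T$, $d_T(a,b)$ is the number of edges on the path between $a$ and $b$. $k$-lazy finger bound: fix a BST $T$ on $[n]$. A finger strategy consists of initial positions $\vec\ell\in[n]^k$ and a sequence $\vec f\in[k]^m$, where finger $f_t$ serves request $s_t$ and then sits at $s_t$; the other fingers stay where they are. With $\sigma(i,t)$ the position of finger $i$ just before time $t$ (and $\sigma(i,1)=\ell_i$), the cost is $\sum_{t=1}^m(1+d_T(s_t,\sigma(f_t,t)))$. Then ${\mathit LF}^k_T(S)$ is the minimum over strategies, and ${\mathit LF}^k(S)=\min_T{\mathit LF}^k_T(S)$ over BSTs $T$ on $[n]$. *)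

(* Defs.v *)
From mathcomp Require Import all_boot.
From mathcomp Require Import boolp.
Set Implicit Arguments. Unset Strict Implicit. Unset Printing Implicit Defensive.

(** A pattern pi of length k is a sequence of naturals
    (a permutation of 1..k). *)
Definition contains (X pi : seq nat) : Prop :=
  exists idx : seq nat,
    [/\ size idx = size pi, sorted ltn idx, all (fun i => i < size X) idx &
      forall a b, a < size pi -> b < size pi ->
        (nth 0 X (nth 0 idx a) < nth 0 X (nth 0 idx b)) = (nth 0 pi a < nth 0 pi b)].

Definition avoids (X pi : seq nat) : Prop := ~ contains X pi.

Definition k_monotone (k : nat) (X : seq nat) : Prop :=
  avoids X (iota 1 k) \/ avoids X (rev (iota 1 k)).

Inductive tree := Leaf | Node of tree & nat & tree.

Fixpoint inorder (t : tree) : seq nat :=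
  match t with Leaf => [::] | Node l x r => inorder l ++ x :: inorder r end.

(** A BST on [n]: a binary tree whose in-order traversal is 1,2,...,n
    (so its keys are exactly [n], each once, in search-tree order). *)
Definition is_BST (n : nat) (t : tree) : Prop := inorder t = iota 1 n.

Fixpoint root_path (t : tree) (a : nat) : seq nat :=
  match t with
  | Leaf => [::]
  | Node l x r =>
      if x == a then [:: x]
      else if a \in inorder l then x :: root_path l a
      else x :: root_path r a
  end.

Fixpoint common_prefix (s1 s2 : seq nat) : nat :=
  match s1, s2 with
  | x :: s1', y :: s2' => if x == y then (common_prefix s1' s2').+1 else 0
  | _, _ => 0
  end.

(** d_T(a,b): number of edges on the tree path between a and b
    = depth a + depth b - 2 depth(lca a b). *)
Definition dist (t : tree) (a b : nat) : nat :=
  let pa := root_path t a in let pb := root_path t b in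
  size pa + size pb - 2 * common_prefix pa pb.

(** Cost of a finger strategy.  pos = current finger positions (finger i is
    at nth 0 pos i, fingers indexed 0..k-1), f = sequence of fingers used,
    S = request sequence. *)
Fixpoint finger_cost (t : tree) (pos f S : seq nat) : nat :=
  match f, S with
  | ft :: f', st :: S' =>
      1 + dist t st (nth 0 pos ft) + finger_cost t (set_nth 0 pos ft st) f' S'
  | _, _ => 0
  end.

(** A valid k-finger strategy for S over keys [n]:
    initial positions ell in [n]^k and finger sequence f in [k]^m, m = |S|
    (fingers [k] are encoded as 0..k-1). *)
Definition strategy (n k : nat) (S ell f : seq nat) : Prop :=
  [/\ size ell = k, all (fun x => 0 < x <= n) ell,
      size f = size S & all (fun i => i < k) f].

(** LF^k_T(S) = min over strategies of the cost (0 if no strategy exists,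
    which only happens in degenerate cases such as k = 0). *)
Definition LF_T_pred (n k : nat) (t : tree) (S : seq nat) : pred nat :=
  fun B => `[< exists ell f, strategy n k S ell f /\ finger_cost t ell f S = B >].

Definition LF_T (n k : nat) (t : tree) (S : seq nat) : nat :=
  match pselect (exists B, LF_T_pred n k t S B) with
  | left h => ex_minn h
  | right _ => 0
  end.

Definition LF_pred (n k : nat) (S : seq nat) : pred nat :=
  fun B => `[< exists t, is_BST n t /\ LF_T n k t S = B >].

Definition LF (n k : nat) (S : seq nat) : nat :=
  match pselect (exists B, LF_pred n k S B) with
  | left h => ex_minn h
  | right _ => 0
  end.

Definition seq_in_n_n (n : nat) (S : seq nat) : Prop :=
  size S = n /\ all (fun x => 0 < x <= n) S.

(* Main.v *)
Require Import Defs.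
From mathcomp Require Import all_boot.
From mathcomp Require Import boolp zify.
Set Implicit Arguments. Unset Strict Implicit. Unset Printing Implicit Defensive.

Fixpoint line (m c : nat) : tree :=
  match c with 0 => Leaf | c'.+1 => Node Leaf m (line m.+1 c') end.

Lemma inorder_line c m : inorder (line m c) = iota m c.
Proof. by elim: c m => [|c IH] m //=; rewrite IH. Qed.

Lemma root_path_line c m a : m <= a < m + c -> root_path (line m c) a = iota m (a - m).+1.
Proof.
elim: c m => [|c IH] m /=; first by lia.
move=> H; case: eqP => [<-|Hne]; first by rewrite subnn.
rewrite IH; last by lia.
have -> : (a - m) = (a - m.+1).+1 by lia.
by [].
Qed.

Lemma cp_iota p q m : common_prefix (iota m p) (iota m q) = minn p q.
Proof.
elim: p q m => [|p IH] [|q] m //=; rewrite eqxx IH; lia.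
Qed.

Lemma dist_line n a b : 0 < a <= n -> 0 < b <= n ->
  dist (line 1 n) a b <= (a - b) + (b - a).
Proof.
move=> Ha Hb; rewrite /dist !root_path_line; try lia.
rewrite cp_iota !size_iota; lia.
Qed.

Lemma LF_T_le n k t S ell f : strategy n k S ell f ->
  LF_T n k t S <= finger_cost t ell f S.
Proof.
move=> Hs; rewrite /LF_T; case: pselect => [h|nh].
  case: ex_minnP => m _ Hmin; apply: Hmin; apply/asboolP; by exists ell, f.
exfalso; apply: nh; exists (finger_cost t ell f S); apply/asboolP; by exists ell, f.
Qed.

Lemma LF_le n k t S : is_BST n t -> LF n k S <= LF_T n k t S.
Proof.
move=> Ht; rewrite /LF; case: pselect => [h|nh].
  case: ex_minnP => m _ Hmin; apply: Hmin; apply/asboolP; by exists t.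
exfalso; apply: nh; exists (LF_T n k t S); apply/asboolP; by exists t.
Qed.

Lemma sub_idx (s X : seq nat) : subseq s X -> exists idx,
  [/\ size idx = size s, sorted ltn idx, all (fun i => i < size X) idx &
      forall a, a < size s -> nth 0 X (nth 0 idx a) = nth 0 s a].
Proof.
elim: X s => [|x X IH] s.
  by case: s => //= _; exists [::].
case: s => [|y s] /=.
  by move=> _; exists [::].
case: eqP => [<- Hs|_ Hs].
  have [idx [H1 H2 H3 H4]] := IH _ Hs.
  exists (0 :: map succn idx); split => /=.
  - by rewrite size_map H1.
  - case: idx H2 {H1 H3 H4} => [|i idx] //= H2.
    by rewrite (map_path (e' := ltn) (b := pred0)) //; apply/hasP => -[].
  - by rewrite all_map; apply: sub_all H3 => i /=.
  - by case=> [|a] //= Ha; rewrite (nth_map 0) ?H1 //= H4.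
have [idx [H1 H2 H3 H4]] := IH _ Hs.
exists (map succn idx); split => /=.
- by rewrite size_map H1.
- case: idx H2 {H1 H3 H4} => [|i idx] //= H2.
  by rewrite (map_path (e' := ltn) (b := pred0)) //; apply/hasP => -[].
- by rewrite all_map; apply: sub_all H3 => i /=.
- move=> a Ha; rewrite (nth_map 0) ?H1 //= H4 //.
Qed.

Lemma contains_inc X s : subseq s X -> sorted ltn s ->
  contains X (iota 1 (size s)).
Proof.
move=> Hs Hso; have [idx [H1 H2 H3 H4]] := sub_idx Hs.
exists idx; split => //; first by rewrite size_iota.
rewrite size_iota => a b Ha Hb; rewrite !H4 // !nth_iota //.
case: (ltngtP a b) => Hab.
- have := (sorted_ltn_nth ltn_trans 0 Hso) a b Ha Hb Hab => /= H; apply/idP/idP; lia.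
- have := (sorted_ltn_nth ltn_trans 0 Hso) b a Hb Ha Hab => /= H; apply/idP/idP; lia.
- by subst; rewrite ltnn; lia.
Qed.

Lemma gtn_trans : transitive (fun a b : nat => b < a).
Proof. move=> a b c /= H1 H2; lia. Qed.

Lemma contains_dec X s : subseq s X -> sorted (fun a b => b < a) s ->
  contains X (rev (iota 1 (size s))).
Proof.
move=> Hs Hso; have [idx [H1 H2 H3 H4]] := sub_idx Hs.
exists idx; split => //; first by rewrite size_rev size_iota.
rewrite size_rev size_iota => a b Ha Hb; rewrite !H4 //.
rewrite !nth_rev ?size_iota // !nth_iota; try lia.
case: (ltngtP a b) => Hab.
- have := (sorted_ltn_nth gtn_trans 0 Hso) a b Ha Hb Hab => /= H.
  have -> : (nth 0 s a < nth 0 s b) = false by apply/negbTE; rewrite -leqNgt ltnW.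
  symmetry; apply/negbTE; rewrite -leqNgt; move: Hab Ha Hb; set m := size s; lia.
- have := (sorted_ltn_nth gtn_trans 0 Hso) b a Hb Ha Hab => /= H.
  rewrite H; symmetry; move: Hab Ha Hb; set m := size s; lia.
- by subst; rewrite ltnn; lia.
Qed.

Lemma all_set_nth (a : pred nat) s i y : all a s -> a y -> i < size s ->
  all a (set_nth 0 s i y).
Proof.
elim: s i => [|x s IH] [|i] //= /andP[Hx Hs] Hy Hi; first by rewrite Hy Hs.
by rewrite Hx IH.
Qed.

Lemma sum_set (pot : nat -> nat) s i y : i < size s ->
  sumn (map pot (set_nth 0 s i y)) + pot (nth 0 s i) = sumn (map pot s) + pot y.
Proof.
elim: s i => [|x s IH] [|i] //= Hi; first lia.
have := IH i Hi; lia.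
Qed.

Section Greedy.
Variables (n k : nat) (t : tree) (r : rel nat) (z : nat) (pot : nat -> nat).
Hypothesis Hdist : forall a b, 0 < a <= n -> 0 < b <= n -> dist t a b <= (a - b) + (b - a).
Hypothesis Hrz : forall x, 0 < x <= n -> ~~ r z x.
Hypothesis Hpot : forall p x, 0 < p <= n -> 0 < x <= n -> ~~ r p x ->
  (x - p) + (p - x) + pot p <= pot x.
Hypothesis Hpotn : forall x, 0 < x <= n -> pot x <= n.

Definition inr (x : nat) := 0 < x <= n.

Definition chainP (P : seq nat) v len := exists s,
  [/\ subseq s P, sorted r s, size s = len & last 0 s = v].

Lemma sumpot_le pos : all inr pos -> sumn (map pot pos) <= size pos * n.
Proof.
elim: pos => [|x pos IH] //= /andP[Hx Hp].
have := Hpotn Hx; have := IH Hp; lia.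
Qed.

Lemma greedy S' : forall P pos, size pos = k -> all inr pos -> all inr S' ->
  (forall i, i < k -> nth 0 pos i = z \/ chainP P (nth 0 pos i) i.+1) ->
  (forall s, subseq s (P ++ S') -> sorted r s -> size s = k -> False) ->
  exists f, [/\ size f = size S', all (fun i => i < k) f &
    finger_cost t pos f S' + sumn (map pot pos) <= size S' + k * n].
Proof.
elim: S' => [|x S IH] P pos Hsz Hpos HS Inv NoC.
  exists [::]; split => //=; rewrite -Hsz; exact: sumpot_le.
move: HS => /= /andP[Hx HS].
set a := (fun p => ~~ r p x).
have hasE : has a pos.
  case: (posnP k) => [Hk0|Hkp].
    by exfalso; apply: (NoC [::]) => //; rewrite ?sub0seq ?Hk0.
  apply/negPn/negP => /hasPn Hn.
  have Hk : k.-1 < size pos by rewrite Hsz prednK.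
  have Hr := Hn _ (mem_nth 0 Hk); rewrite /a negbK in Hr.
  case: (Inv k.-1); first by rewrite prednK.
    move=> Hz; by move: (Hrz Hx); rewrite -Hz Hr.
  move=> [s [Hs1 Hs2 Hs3 Hs4]].
  rewrite prednK // in Hs3.
  apply: (NoC s) => //; apply: subseq_trans Hs1 _; exact: prefix_subseq.
set i := find a pos.
have hi : i < k by rewrite -Hsz -has_find.
have Hel : a (nth 0 pos i) := nth_find 0 hasE.
have Hpi : inr (nth 0 pos i) by apply: (all_nthP 0 Hpos); rewrite Hsz.
have G1 : size (set_nth 0 pos i x) = k.
  by rewrite size_set_nth Hsz; apply/maxn_idPr.
have G2 : all inr (set_nth 0 pos i x).
  by apply: all_set_nth => //; rewrite Hsz.
have G3 : all inr S.
  by [].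
have G4 : forall j, j < k -> nth 0 (set_nth 0 pos i x) j = z \/ chainP (rcons P x) (nth 0 (set_nth 0 pos i x) j) j.+1.
  move=> j Hj; rewrite nth_set_nth /=; case: eqP => [->|_].
  + right; case Ei: i => [|i'].
      by exists [:: x]; split => //; rewrite sub1seq mem_rcons mem_head.
    have Hi' : i' < find a pos by rewrite -/i Ei.
    have Hb := before_find 0 Hi'; rewrite /a in Hb; move/negbFE: Hb => Hb.
    case: (Inv i'); first by rewrite -Ei ltnW.
      by move=> Hz; move: (Hrz Hx); rewrite -Hz Hb.
    move=> [s [Hs1 Hs2 Hs3 Hs4]].
    exists (rcons s x); split.
    * by rewrite -!cats1; apply: cat_subseq => //; rewrite subseq_refl.
    * case: s Hs1 Hs2 Hs3 Hs4 => [|y s] //= _ Hs2 _ Hs4.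
      by rewrite rcons_path Hs2 /= Hs4.
    * by rewrite size_rcons Hs3.
    * by rewrite last_rcons.
  + case: (Inv j Hj) => [->|[s [Hs1 Hs2 Hs3 Hs4]]]; first by left.
    right; exists s; split => //; apply: subseq_trans Hs1 _; exact: subseq_rcons.
have G5 : forall s, subseq s (rcons P x ++ S) -> sorted r s -> size s = k -> False.
  by move=> s; rewrite cat_rcons; apply: NoC.
have [f [F1 F2 F3]] := IH (rcons P x) (set_nth 0 pos i x) G1 G2 G3 G4 G5.
exists (i :: f); split => /=.
- by rewrite F1.
- by rewrite hi F2.
have Hsum := sum_set pot x (i := i) (s := pos); rewrite Hsz in Hsum.
have := Hsum hi; have := Hdist Hx Hpi; have := Hpot Hpi Hx Hel.
move: F3; lia.
Qed.

End Greedy.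

Lemma all_nseq_inr n k z : 0 < z <= n -> all (inr n) (nseq k z).
Proof. by move=> Hz; elim: k => //= k ->; rewrite /inr Hz. Qed.

Lemma nth_nseq0 k z i : i < k -> nth 0 (nseq k z) i = z.
Proof. by move=> Hi; rewrite nth_nseq Hi. Qed.

Theorem mainTheorem5 :
  exists c : nat, 0 < c /\
    forall n k : nat, 1 <= n -> 1 <= k ->
    forall S : seq nat, seq_in_n_n n S -> k_monotone k S ->
      LF n k S <= c * n * k.
Proof.
exists 2; split => // n k Hn Hk S [HsS HaS] Hmon.
have HBST : is_BST n (line 1 n) by rewrite /is_BST inorder_line.
have Hd : forall a b, 0 < a <= n -> 0 < b <= n ->
    dist (line 1 n) a b <= (a - b) + (b - a) by move=> a b; exact: dist_line.
have final : forall z pos f, 0 < z <= n -> pos = nseq k z ->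
    size f = size S -> all (fun i => i < k) f ->
    finger_cost (line 1 n) pos f S <= size S + k * n ->
    LF n k S <= 2 * n * k.
  move=> z pos f Hz -> F1 F2 F3.
  apply: leq_trans (LF_le k S HBST) _.
  apply: leq_trans (LF_T_le (line 1 n) (ell := nseq k z) (f := f) _) _.
    by split => //; [rewrite size_nseq | exact: all_nseq_inr].
  move: F3; rewrite HsS; nia.
case: Hmon => Hav.
- have [f [F1 F2 F3]] := @greedy n k (line 1 n) ltn n (fun p => n - p) Hd
    (fun x Hx => ltac:(rewrite -leqNgt; case/andP: Hx => _ ->; done))
    (fun p x Hp Hx Hr => ltac:(rewrite -leqNgt in Hr; move: Hp Hx Hr; rewrite /inr; lia))
    (fun x _ => leq_subr _ _)
    S [::] (nseq k n) (size_nseq _ _) (@all_nseq_inr n k n ltac:(lia)) HaS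
    (fun i Hi => or_introl (nth_nseq0 _ Hi))
    (fun s Hs Hso Hsz => Hav ltac:(rewrite -Hsz; exact: contains_inc Hs Hso)).
  + apply: (final n _ f) => //; [lia | lia].
- have [f [F1 F2 F3]] := @greedy n k (line 1 n) (fun a b => b < a) 1 (fun p => p - 1) Hd
    (fun x Hx => ltac:(rewrite -leqNgt; case/andP: Hx => -> _; done))
    (fun p x Hp Hx Hr => ltac:(rewrite -leqNgt in Hr; move: Hp Hx Hr; rewrite /inr; lia))
    (fun x Hx => ltac:(move: Hx; rewrite /inr; lia))
    S [::] (nseq k 1) (size_nseq _ _) (@all_nseq_inr n k 1 ltac:(lia)) HaS
    (fun i Hi => or_introl (nth_nseq0 _ Hi))
    (fun s Hs Hso Hsz => Hav ltac:(rewrite -Hsz; exact: contains_dec Hs Hso)).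
  apply: (final 1 _ f) => //; lia.
Qed.
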